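(* Fix $k\ge 2$, $\epsilon>0$ and a graphlet $\mathsf{G}$ on $k$ vertices. For a graph $G$ on $n$ nodes, the number of pairs $(\mathcal{W},\mathcal{W}')\in\mathcal{D}\times\mathcal{D}$ such that $\mathrm{Cov}\big(\tilde W(\mathcal{W},\mathsf{G}),\tilde W(\mathcal{W}',\mathsf{G})\big)>0$ is $O(n^{2k-2})$ (with the implied constant depending only on $k$).
   Context: Let $G=(V,E)$ be a simple undirected graph with $V=\{v_1,\dots,v_n\}$, $a_{i,j}=1$ iff $\{v_i,v_j\}\in E$. A graphlet is a simple graph $\mathsf{G}=(\mathsf{V},\mathsf{E})$, $\mathsf{V}=\{u_1,\dots,u_k\}$. Independently for each ordered pair $(i,j)$, $i\ne j$, let $\tilde a_{i,j}$ be a bit with $\Pr[\tilde a_{i,j}=1]=e^{\epsilon}/(1+e^{\epsilon})$ if $a_{i,j}=1$ and $1/(1+e^{\epsilon})$ if $a_{i,j}=0$, and set $\hat a_{i,j}=\frac{e^{\epsilon}+1}{e^{\epsilon}-1}\tilde a_{i,j}-\frac{1}{e^{\epsilon}-1}$. $\mathcal{D}$ is the set of tuples $\mathcal{W}=(v_{\ell_1},\dots,v_{\ell_k})\in V^k$ of pairwise distinct nodes, and $\tilde W(\mathcal{W},\mathsf{G})=\prod_{\{u_i,u_j\}\in\mathsf{E},\,i<j}\hat a_{\ell_i,\ell_j}$. *)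

(* Defs.v *)
From HB Require Import structures.
From mathcomp Require Import all_boot all_order all_algebra.
From mathcomp Require Import reals sequences.
Set Implicit Arguments. Unset Strict Implicit. Unset Printing Implicit Defensive.
Import Order.TTheory GRing.Theory Num.Theory.
Local Open Scope ring_scope.

Section RR.
Variables (R : realType) (eps : R) (n : nat) (G : rel 'I_n).

Definition outcome := {ffun 'I_n * 'I_n -> bool}.

(* Pr[tilde a = b] given the true bit a *)
Definition rr_prob (a b : bool) : R :=
  let e := expR eps in
  if a == b then e / (1 + e) else 1 / (1 + e).

(* probability of an outcome: independent bits; the true bit of (i,j) is G i j
   (diagonal bits are also drawn, with G i i = false, but never used) *)
Definition weight (w : outcome) : R :=
  \prod_(p : 'I_n * 'I_n) rr_prob (G p.1 p.2) (w p).

Definition Exp (X : outcome -> R) : R := \sum_(w : outcome) weight w * X w.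

Definition Cov (X Y : outcome -> R) : R :=
  Exp (fun w => X w * Y w) - Exp X * Exp Y.

Definition ahat (w : outcome) (i j : 'I_n) : R :=
  let e := expR eps in
  (e + 1) / (e - 1) * (w (i, j))%:R - 1 / (e - 1).

Definition Wtilde (k : nat) (g : rel 'I_k) (W : {ffun 'I_k -> 'I_n})
  (w : outcome) : R :=
  \prod_(i : 'I_k) \prod_(j : 'I_k | (i < j)%N && g i j) ahat w (W i) (W j).

Definition num_pos_cov (k : nat) (g : rel 'I_k) : nat :=
  #|[set WW : {ffun 'I_k -> 'I_n} * {ffun 'I_k -> 'I_n} |
      [&& injectiveb WW.1, injectiveb WW.2 &
          0 < Cov (Wtilde g WW.1) (Wtilde g WW.2)]]|.
End RR.

(* Main.v *)
Require Import Defs.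
From HB Require Import structures.
From mathcomp Require Import all_boot all_order all_algebra.
From mathcomp Require Import reals sequences exp boolp.
From mathcomp Require Import ring lra zify.
Import Order.TTheory GRing.Theory Num.Theory.
Local Open Scope ring_scope.

Section P.
Variables (R : realType) (eps : R) (n : nat) (G : rel 'I_n).
Hypothesis eps0 : 0 < eps.

Lemma rr_sum (a : bool) : \sum_(b : bool) rr_prob eps a b = 1.
Proof.
rewrite big_bool /rr_prob.
have e0 : 0 < expR eps by rewrite expR_gt0.
have ne : 1 + expR eps != 0 by rewrite lt0r_neq0 // addr_gt0.
by case: a => /=; field.
Qed.

Lemma Exp_prod (F : 'I_n * 'I_n -> bool -> R) :
  Exp eps G (fun w => \prod_p F p (w p)) =
  \prod_p \sum_b rr_prob eps (G p.1 p.2) b * F p b.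
Proof.
rewrite bigA_distr_bigA /Exp /weight; apply: eq_bigr => w _.
by rewrite -big_split.
Qed.

Lemma Cov0 (F H : 'I_n * 'I_n -> bool -> R) :
  (forall p, (forall b, F p b = 1) \/ (forall b, H p b = 1)) ->
  Cov eps G (fun w => \prod_p F p (w p)) (fun w => \prod_p H p (w p)) = 0.
Proof.
move=> hFH; rewrite /Cov.
have -> : (fun w : outcome n => \prod_p F p (w p) * \prod_p H p (w p)) =
   (fun w => \prod_p (F p (w p) * H p (w p))).
  by apply: funext => w; rewrite big_split.
rewrite (Exp_prod (fun p b => F p b * H p b)) !Exp_prod -big_split /=; apply/eqP; rewrite subr_eq0; apply/eqP.
apply: eq_bigr => p _.
case: (hFH p) => h.
  under eq_bigr do rewrite h mul1r.
  under [X in X * _]eq_bigr do rewrite h mulr1.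
  by rewrite rr_sum mul1r.
under eq_bigr do rewrite h mulr1.
under [X in _ * X]eq_bigr do rewrite h mulr1.
by rewrite rr_sum mulr1.
Qed.
End P.
Section Q.
Variables (R : realType) (eps : R) (n : nat) (G : rel 'I_n) (k : nat) (g : rel 'I_k).
Hypothesis eps0 : 0 < eps.

Definition hh (b : bool) : R :=
  (expR eps + 1) / (expR eps - 1) * b%:R - 1 / (expR eps - 1).

Definition xf (W : {ffun 'I_k -> 'I_n}) (p : 'I_n * 'I_n) (b : bool) : R :=
  \prod_(i : 'I_k) \prod_(j : 'I_k)
     (if [&& (i < j)%N, g i j & (W i, W j) == p] then hh b else 1).

Lemma Wt_prod W w : Wtilde eps g W w = \prod_p xf W p (w p).
Proof.
rewrite /Wtilde /xf exchange_big /=; apply: eq_bigr => i _.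
rewrite exchange_big /= big_mkcond /=; apply: eq_bigr => j _.
case: ifP => c.
  rewrite (bigD1 (W i, W j)) //= andbA c eqxx /= big1 ?mulr1 //.
  by move=> p; rewrite eq_sym => /negbTE ->; rewrite !andbF.
by rewrite big1 // => p _; rewrite andbA c.
Qed.

Lemma cov_zero (W W' : {ffun 'I_k -> 'I_n}) :
  ~~ [exists i : 'I_k, exists j : 'I_k, exists i' : 'I_k, exists j' : 'I_k,
        [&& (i < j)%N, g i j, (i' < j')%N, g i' j', W i == W' i' & W j == W' j']] ->
  Cov eps G (Wtilde eps g W) (Wtilde eps g W') = 0.
Proof.
move=> hn.
have -> : Wtilde eps g W = (fun w => \prod_p xf W p (w p)).
  by apply: funext => w; rewrite Wt_prod.
have -> : Wtilde eps g W' = (fun w => \prod_p xf W' p (w p)).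
  by apply: funext => w; rewrite Wt_prod.
apply: Cov0 => p.
case: (boolP [exists i : 'I_k, exists j : 'I_k, [&& (i < j)%N, g i j & (W i, W j) == p]]).
  case/existsP => i /existsP [j] /and3P [hij gij /eqP hp].
  right => b; rewrite /xf; apply: big1 => i' _; apply: big1 => j' _.
  case: ifP => // /and3P [hij' gij' /eqP hp'].
  case/negP: hn; apply/existsP; exists i; apply/existsP; exists j.
  apply/existsP; exists i'; apply/existsP; exists j'.
  rewrite hij gij hij' gij' /=.
  by move: hp; rewrite -hp' => -[-> ->]; rewrite !eqxx.
move=> hnp; left => b; rewrite /xf; apply: big1 => i _; apply: big1 => j _.
case: ifP => // c; case/negP: hnp.
by apply/existsP; exists i; apply/existsP; exists j.
Qed.
End Q.
Lemma sum_ge (I : finType) (F : I -> nat) x : (F x <= \sum_i F i)%N.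
Proof. by rewrite (bigD1 x) //= leq_addr. Qed.

Lemma count_fix (k n : nat) (i' j' : 'I_k) (a b : 'I_n) : i' != j' ->
  (\sum_(W : {ffun 'I_k -> 'I_n}) ((W i' == a) && (W j' == b) : nat) = n ^ (k - 2))%N.
Proof.
move=> ne.
pose F := fun x : 'I_k => if x == i' then pred1 a else if x == j' then pred1 b else predT.
have -> : (\sum_(W : {ffun 'I_k -> 'I_n}) ((W i' == a) && (W j' == b) : nat))%N = #|family F|.
  rewrite -sum1_card [RHS]big_mkcond /=; apply: eq_bigr => W _.
  have -> : (W \in family F) = (W i' == a) && (W j' == b).
    apply/familyP/andP.
      move=> h; split.
        by move: (h i'); rewrite /F eqxx.
      by move: (h j'); rewrite /F eqxx eq_sym (negbTE ne).
    case=> h1 h2 x; rewrite /F; case: eqP => [-> //|_].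
    by case: eqP => [-> //|_].
  by case: andP.
rewrite card_family foldrE big_image /=.
rewrite (bigD1 i') //= (bigD1 j') /=; last by rewrite eq_sym.
rewrite /F eqxx eq_sym (negbTE ne) eqxx card1 !mul1n.
rewrite (eq_bigr (fun _ => n)); last first.
  by move=> x /andP [/negbTE -> /negbTE ->]; rewrite card_ord.
rewrite prod_nat_const.
have -> : #|[eta pred1 b]| = 1%N by rewrite -(card1 b); apply: eq_card.
rewrite mul1n; apply: f_equal.
have h1 := cardD1 i' (@predT 'I_k).
have h2 := cardD1 j' [predD1 (@predT 'I_k) & i'].
rewrite card_ord inE /= in h1.
rewrite inE /= eq_sym ne in h2.
rewrite (eq_card (B := [predD1 [predD1 predT & i'] & j'])); last first.
  by move=> x; rewrite !inE /= andbT andbC.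
rewrite andTb in h2; change (j' \in predT) with true in h2. move: h1 h2. set m := #|_|. set m2 := #|_|. move=> h1 h2. simpl in h2. lia.
Qed.
Theorem lemma3 (k : nat) : (2 <= k)%N ->
  exists C : nat,
    forall (R : realType) (eps : R), 0 < eps ->
    forall (g : rel 'I_k), symmetric g -> irreflexive g ->
    forall (n : nat) (G : rel 'I_n), symmetric G -> irreflexive G ->
      (num_pos_cov eps G g <= C * n ^ (2 * k - 2))%N.
Proof.
move=> hk; exists (k ^ 4)%N => R eps eps0 g gs gi n G Gs Gi.
rewrite /num_pos_cov.
pose P := fun (i j i' j' : 'I_k) (WW : {ffun 'I_k -> 'I_n} * {ffun 'I_k -> 'I_n}) =>
  [&& (i' < j')%N, WW.1 i == WW.2 i' & WW.1 j == WW.2 j'].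
apply: (@leq_trans (\sum_(WW : {ffun 'I_k -> 'I_n} * {ffun 'I_k -> 'I_n})
   \sum_(i : 'I_k) \sum_(j : 'I_k) \sum_(i' : 'I_k) \sum_(j' : 'I_k) (P i j i' j' WW : nat))).
  rewrite -sum1_card [X in (X <= _)%N]big_mkcond /=; apply: leq_sum => WW _.
  case: ifP => // /[!inE] /and3P [_ _ hpos].
  have : [exists i : 'I_k, exists j : 'I_k, exists i' : 'I_k, exists j' : 'I_k,
        [&& (i < j)%N, g i j, (i' < j')%N, g i' j', WW.1 i == WW.2 i' & WW.1 j == WW.2 j']].
    by apply: contraT => hn; rewrite cov_zero // ltxx in hpos.
  case/existsP => i /existsP [j /existsP [i' /existsP [j']]].
  case/and5P => hij gij hij' gij' /andP [e1 e2].
  rewrite (bigD1 i) //= (bigD1 j) //= (bigD1 i') //= (bigD1 j') //= {1}/P hij' e1 e2 /=.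
  lia.
apply: (@leq_trans (\sum_(i : 'I_k) \sum_(j : 'I_k) \sum_(i' : 'I_k) \sum_(j' : 'I_k) n ^ (2 * k - 2))%N); last first.
  rewrite !sum_nat_const !card_ord !mulnA.
  by rewrite !expnS expn0 muln1 !mulnA.
rewrite exchange_big; apply: leq_sum => i _.
rewrite exchange_big; apply: leq_sum => j _.
rewrite exchange_big; apply: leq_sum => i' _.
rewrite exchange_big; apply: leq_sum => j' _.
rewrite /P; case: (ltnP i' j') => hij' /=; last by rewrite big1.
rewrite -(pair_bigA _ (fun W1 W2 : {ffun 'I_k -> 'I_n} => ((W1 i == W2 i') && (W1 j == W2 j') : nat))) /=.
under eq_bigr => W1 _.
  under eq_bigr do rewrite (eq_sym (W1 i)) (eq_sym (W1 j)).
  rewrite count_fix; last by rewrite neq_ltn hij'.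
  over.
rewrite sum_nat_const card_ffun !card_ord -expnD.
have -> : (k + (k - 2) = 2 * k - 2)%N by lia.
by [].
Qed.
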